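(* Let $(M,d)$ be a bounded metric space with uniform relative normal structure such that $\mathcal A(M)$ is compact, and let $T:M\to M$ be orbit-nonexpansive. Then $T$ has a fixed point.
   Context: For a metric space $(M,d)$, a mapping $T:M\to M$ and $x\in M$, the orbit of $x$ is $o_T(x)=\{x\}\cup\{T^nx:n\in\mathbb N\}$. For $x\in M$ and bounded $A\subseteq M$, $D(x,A)=\sup\{d(x,a):a\in A\}$ and $\delta(A)=\sup\{d(x,y):x,y\in A\}$. $T$ is orbit-nonexpansive if $d(Tx,Ty)\le D(x,o_T(y))$ for all $x,y\in M$. A subset of $M$ is admissible if it is an intersection of closed balls of $M$; $\mathcal A(M)$ denotes the family of admissible sets. $\mathcal A(M)$ is compact if every subfamily of $\mathcal A(M)$ all of whose finite intersections are nonempty has nonempty intersection. $(M,d)$ has uniform relative normal structure (URNS) if there is $c\in(0,1)$ such that for every admissible $A$ with $\delta(A)>0$: (i) there exists $z_A\in M$ with $D(z_A,A)\le c\,\delta(A)$; and (ii) every $x\in M$ with $D(x,A)\le c\,\delta(A)$ satisfies $d(x,z_A)\le c\,\delta(A)$. *)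

(* Defs.v *)
From mathcomp Require Import all_boot all_order all_algebra.
From mathcomp Require Import all_classical all_reals.
Set Implicit Arguments. Unset Strict Implicit. Unset Printing Implicit Defensive.
Import Order.TTheory GRing.Theory Num.Theory.
Local Open Scope classical_set_scope.
Local Open Scope ring_scope.

Section Defs.
Variables (R : realType) (M : Type) (d : M -> M -> R).

Definition is_metric : Prop :=
  [/\ forall x y, d x y = 0 <-> x = y,
      forall x y, d x y = d y x &
      forall x y z, d x z <= d x y + d y z].

Definition metric_bounded : Prop := exists B : R, forall x y, d x y <= B.

Definition orbit (T : M -> M) (x : M) : set M :=
  [set x] `|` [set iter n T x | n in [set: nat]].

Definition Dist (x : M) (A : set M) : R := sup [set d x a | a in A].

Definition diam (A : set M) : R := sup [set d x y | x in A & y in A].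

Definition orbit_nonexpansive (T : M -> M) : Prop :=
  forall x y, d (T x) (T y) <= Dist x (orbit T y).

Definition closed_ball (a : M) (r : R) : set M := [set x | d a x <= r].

Definition admissible (A : set M) : Prop :=
  exists F : set (M * R), (forall p, F p -> 0 <= p.2) /\
    A = \bigcap_(p in F) closed_ball p.1 p.2.

Definition admissible_compact : Prop :=
  forall F : set (set M), (forall A, F A -> admissible A) ->
    (forall G : set (set M), G `<=` F -> finite_set G -> G !=set0 ->
       (\bigcap_(A in G) A) !=set0) ->
    (\bigcap_(A in F) A) !=set0.

Definition URNS : Prop :=
  exists c : R, 0 < c < 1 /\
    forall A : set M, admissible A -> 0 < diam A ->
      exists zA : M, Dist zA A <= c * diam A /\
        forall x : M, Dist x A <= c * diam A -> d x zA <= c * diam A.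

End Defs.

(* Main.v *)
Require Import Defs.
From mathcomp Require Import all_boot all_order all_algebra.
From mathcomp Require Import all_classical all_reals.
From mathcomp Require Import ring lra.
From mathcomp Require finmap.
Set Implicit Arguments. Unset Strict Implicit. Unset Printing Implicit Defensive.
Import Order.TTheory GRing.Theory Num.Theory.
Local Open Scope classical_set_scope.
Local Open Scope ring_scope.

Section Main.
Variables (R : realType) (M : Type) (d : M -> M -> R) (T : M -> M).
Hypothesis hmet : is_metric d.
Hypothesis hbd : metric_bounded d.
Hypothesis hone : orbit_nonexpansive d T.
Hypothesis hcpt : admissible_compact d.

Lemma dxx x : d x x = 0.
Proof. by case: hmet => h _ _; apply/h. Qed.
Lemma dsym x y : d x y = d y x.
Proof. by case: hmet. Qed.
Lemma dtri x y z : d x z <= d x y + d y z.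
Proof. by case: hmet. Qed.
Lemma dge0 x y : 0 <= d x y.
Proof. have := dtri x y x; rewrite dxx (dsym y x) => h; lra. Qed.
Lemma deq0 x y : d x y <= 0 -> x = y.
Proof. move=> h; case: hmet => H _ _; apply/H; have := dge0 x y; lra. Qed.

Lemma Dist_ub x A a : A a -> d x a <= Dist d x A.
Proof.
move=> Aa; case: hbd => B hB; apply: sup_upper_bound; last by exists a.
split; first by exists (d x a), a.
by exists B => _ [b _ <-]; exact: hB.
Qed.

Lemma Dist_le x A r : 0 <= r -> (forall a, A a -> d x a <= r) -> Dist d x A <= r.
Proof.
move=> r0 h; have [[a Aa]|A0] := pselect (A !=set0).
  by apply: ge_sup; [exists (d x a), a|move=> _ [b Ab <-]; exact: h].
rewrite /Dist (_ : [set d x a | a in A] = set0) ?sup0 //.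
by apply/seteqP; split => // t [b Ab _]; apply: A0; exists b.
Qed.

Lemma diam_ub A x y : A x -> A y -> d x y <= diam d A.
Proof.
move=> Ax Ay; case: hbd => B hB; apply: sup_upper_bound; last by exists x => //; exists y.
split; first by exists (d x y), x => //; exists y.
by exists B => _ [a _ [b _ <-]]; exact: hB.
Qed.

Lemma diam_le A r : 0 <= r -> (forall x y, A x -> A y -> d x y <= r) -> diam d A <= r.
Proof.
move=> r0 h; have [[a Aa]|A0] := pselect (A !=set0).
  apply: ge_sup; first by exists (d a a), a => //; exists a.
  by move=> _ [x Ax [y Ay <-]]; exact: h.
rewrite /diam (_ : [set d x y | x in A & y in A] = set0) ?sup0 //.
by apply/seteqP; split => // t [x Ax _]; apply: A0; exists x.
Qed.

Definition hullc (A : set M) y := forall p r, 0 <= r ->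
  (forall a, A a -> d p a <= r) -> d p y <= r.

Lemma adm_closed A y : admissible d A -> hullc A y -> A y.
Proof.
case=> F [F0 ->] hy [p r] Fp /=; apply: hy; first exact: (F0 (p, r)).
by move=> a Aa; exact: (Aa (p, r)).
Qed.

Lemma closed_adm A : (forall y, hullc A y -> A y) -> admissible d A.
Proof.
move=> H; exists [set pr | 0 <= pr.2 /\ forall a, A a -> d pr.1 a <= pr.2].
split; first by move=> p [].
apply/seteqP; split=> [y Ay [p r] [r0 h]|y hy]; first exact: h.
by apply: H => p r r0 h; exact: (hy (p, r) (conj r0 h)).
Qed.

Definition Cs (A : set M) (s : R) := [set x | forall a, A a -> d x a <= s].

Lemma Cs_adm A s : 0 <= s -> admissible d (Cs A s).
Proof.
move=> s0; apply: closed_adm => y hy a Aa; rewrite dsym; apply: hy => // x Cx.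
by rewrite dsym; exact: Cx.
Qed.

Definition inv (A : set M) := forall x, A x -> A (T x).

Lemma orbit_sub A y : inv A -> A y -> Defs.orbit T y `<=` A.
Proof.
move=> iA Ay z [->//|[n _ <-]]; elim: n => [//|n IH] /=; exact: iA.
Qed.

Lemma one_bound A x y s : 0 <= s -> inv A -> A y ->
  (forall a, A a -> d x a <= s) -> d (T x) (T y) <= s.
Proof.
move=> s0 iA Ay h; apply: le_trans (hone x y) _; apply: Dist_le => // a oa.
by apply: h; exact: orbit_sub oa.
Qed.


Lemma min_seq (s : seq (set M)) : s != [::] ->
  (forall A B, A \in s -> B \in s -> A `<=` B \/ B `<=` A) ->
  exists2 m, m \in s & forall B, B \in s -> m `<=` B.
Proof.
elim: s => [//|a s IH] _ tot.
have [->|sn] := eqVneq s [::].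
  by exists a; rewrite ?inE ?eqxx // => B; rewrite inE => /eqP ->.
have [|m ms hm] := IH sn.
  by move=> A B As Bs; apply: tot; rewrite inE ?As ?Bs orbT.
have mas : m \in a :: s by rewrite inE ms orbT.
have [am|ma] := tot a m (mem_head _ _) mas.
  exists a; first exact: mem_head.
  move=> B; rewrite inE => /orP[/eqP ->//|Bs].
  exact: subset_trans am (hm _ Bs).
exists m => //.
by move=> B; rewrite inE => /orP[/eqP ->//|Bs]; exact: hm.
Qed.

Lemma min_chain (G : set (set M)) : finite_set G -> G !=set0 ->
  (forall A B, G A -> G B -> A `<=` B \/ B `<=` A) ->
  exists2 m, G m & forall B, G B -> m `<=` B.
Proof.
move=> /finite_fsetP[X ->] [A0 GA0] tot.
have [||m ms hm] := @min_seq (finmap.enum_fset X).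
- have h : A0 \in finmap.enum_fset X by [].
  by apply/eqP => e; rewrite e in h.
- by move=> A B As Bs; apply: tot.
by exists m => // B GB; exact: hm.
Qed.

Lemma chain_cap (F : set (set M)) :
  (forall A, F A -> admissible d A /\ A !=set0) ->
  (forall A B, F A -> F B -> A `<=` B \/ B `<=` A) ->
  (\bigcap_(A in F) A) !=set0.
Proof.
move=> FA tot; apply: hcpt; first by move=> A /FA[].
move=> G GF fG G0; have [m Gm hm] := min_chain fG G0 (fun A B GA GB => tot A B (GF _ GA) (GF _ GB)).
have [x mx] := (FA m (GF m Gm)).2.
by exists x => B GB; exact: hm.
Qed.


Definition good (A : set M) := [/\ admissible d A, A !=set0, inv A &
  forall x s, 0 <= s -> (forall a, A a -> d x a <= s) ->
    forall a, A a -> d (T x) a <= s].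

Definition Qs (S A : set M) := [/\ A `<=` S, admissible d A, A !=set0 & inv A].

Lemma good_sub S : admissible d S -> S !=set0 -> inv S ->
  exists2 A, good A & A `<=` S.
Proof.
move=> aS nS iS.
pose TT := {A : set M | Qs S A}.
pose Rr (a b : TT) := `[< sval b `<=` sval a >].
have [| | | |t tmax] := @Zorn TT Rr.
- by move=> ?; apply/asboolP.
- by move=> ? ? ? /asboolP h1 /asboolP h2; apply/asboolP; exact: subset_trans h2 h1.
- move=> [A QA] [B QB] /asboolP BA /asboolP AB.
  by apply: eq_exist; apply/seteqP; split.
- move=> Ch Chtot.
  pose I := S `&` \bigcap_(a in Ch) sval a.
  have QI : Qs S I.
    split.
    + by move=> x [].
    + apply: closed_adm => y hy; split.
        apply: adm_closed aS _ => p r r0 h; apply: hy => // x [Sx _]; exact: h.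
      move=> a Cha; case: (svalP a) => _ aa _ _; apply: adm_closed aa _.
      move=> p r r0 h; apply: hy => // x [_ hx]; apply: h; exact: hx.
    + pose F := [set S] `|` [set sval a | a in Ch].
      have [||x Fx] := @chain_cap F.
      * move=> A [->|[a _ <-]]; first by split.
        by case: (svalP a).
      * have sub (a : TT) : sval a `<=` S by case: (svalP a).
        move=> A B [->|[a Ca <-]] [->|[b Cb <-]].
        - by left.
        - by right; exact: sub.
        - by left; exact: sub.
        - have [/asboolP h|/asboolP h] := Chtot a b Ca Cb; [right|left]; exact: h.
      exists x; split; first by apply: Fx; left.
      by move=> a Ca; apply: Fx; right; exists a.
    + move=> x [Sx hx]; split; first exact: iS.
      by move=> a Ca; case: (svalP a) => _ _ _ ia; apply: ia; exact: hx.
  exists (exist _ I QI) => s Cs; apply/asboolP => x /= [_ hx]; exact: hx.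
case: t tmax => A QA tmax; have [AS aA nA iA] := QA.
exists A => //; split => // x s s0 hx.
pose A' := [set y | forall p r, 0 <= r -> (forall a, A a -> d p (T a) <= r) -> d p y <= r].
have A'A : A' `<=` A.
  move=> y hy; apply: adm_closed aA _ => p r r0 h; apply: hy => // a Aa.
  exact/h/iA.
have QA' : Qs S A'.
  split.
  + exact: subset_trans A'A AS.
  + apply: closed_adm => y hy p r r0 h; apply: hy => // y' hy'; exact: hy'.
  + case: nA => a0 Aa0; exists (T a0) => p r r0 h; exact: h.
  + move=> y hy p r r0 h; apply: h; exact: A'A.
have /(congr1 sval) /= eA : exist _ A' QA' = exist _ A QA.
  by apply: tmax; apply/asboolP.
move=> a; rewrite -eA => Aa; apply: Aa => // a' Aa'.
exact: (one_bound s0 iA).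
Qed.

Variable c : R.
Hypothesis hc0 : 0 < c.
Hypothesis hc1 : c < 1.
Hypothesis hU : forall A : set M, admissible d A -> 0 < diam d A ->
      exists zA : M, Dist d zA A <= c * diam d A /\
        forall x : M, Dist d x A <= c * diam d A -> d x zA <= c * diam d A.

Lemma diam_ge0 A : A !=set0 -> 0 <= diam d A.
Proof. by case=> a Aa; rewrite -(dxx a); exact: diam_ub. Qed.

Lemma key A : good A -> exists A2, [/\ good A2,
  (forall u a, A2 u -> A a -> d u a <= c * diam d A) & diam d A2 <= c * diam d A].
Proof.
move=> gA; have [aA nA iA PA] := gA.
have d0 := diam_ge0 nA.
have s0 : 0 <= c * diam d A by apply: mulr_ge0 => //; exact: ltW.
move: d0; rewrite le_eqVlt => /orP[/eqP d0|dpos].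
  exists A; split => //.
    by move=> u a Au Aa; rewrite -d0 mulr0 d0; exact: diam_ub.
  by rewrite -d0 mulr0.
have [z [hz1 hz2]] := hU aA dpos.
set s := c * diam d A in s0 hz1 hz2 *.
pose C := Cs A s.
pose K := [set y | C y /\ forall P, good P -> P `<=` C -> forall p, P p -> d y p <= s].
have aK : admissible d K.
  apply: closed_adm => y hy; split.
    move=> a Aa; rewrite dsym; apply: hy => // x [Cx _]; rewrite dsym; exact: Cx.
  move=> P gP PC p Pp; rewrite dsym; apply: hy => // x [_ hx]; rewrite dsym.
  exact: (hx P gP PC p Pp).
have nK : K !=set0.
  exists z; split.
    by move=> a Aa; apply: le_trans hz1; exact: Dist_ub.
  move=> P gP PC p Pp; rewrite dsym; apply: hz2; apply: Dist_le => //.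
  exact: PC.
have iK : inv K.
  move=> y [Cy hy]; split; first exact: PA.
  move=> P gP PC; have [_ _ _ PP] := gP; apply: PP => // p Pp; exact: (hy P gP PC p Pp).
have [A2 gA2 A2K] := good_sub aK nK iK.
have A2C : A2 `<=` C by move=> x /A2K [].
exists A2; split => //.
  by move=> u a /A2C; apply.
apply: diam_le => // x y /A2K [_ hx] Ay; exact: (hx A2 gA2 A2C y Ay).
Qed.


Lemma bern (h : R) n : 0 <= h -> 1 + n%:R * h <= (1 + h) ^+ n.
Proof.
move=> h0; elim: n => [|n IH]; first by rewrite mul0r addr0 expr0.
have n0 : 0 <= n%:R :> R by [].
rewrite exprS -natr1; nra.
Qed.

Lemma geo t L : (forall n, t <= c ^+ n * L) -> t <= 0.
Proof.
move=> H; rewrite leNgt; apply/negP => t0.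
have L0 : 0 < L by have := H 0%N; rewrite expr0 mul1r => h; lra.
pose h := c^-1 - 1.
have hc : c * (1 + h) = 1 by rewrite /h addrC subrK mulfV // gt_eqF.
have h0 : 0 < h.
  have : 1 < c^-1 by rewrite invf_gt1.
  rewrite /h; lra.
have ht : 0 < h * t by apply: mulr_gt0.
pose N := Num.bound (L / (h * t)).
have hN : L / (h * t) < N%:R.
  by apply: archi_boundP; apply: divr_ge0; [exact: ltW|exact: ltW].
have eL : L = (L / (h * t)) * (h * t) by rewrite divfK // gt_eqF.
have hB := bern N (ltW h0).
have hQ : c ^+ N * (1 + h) ^+ N = 1 by rewrite -exprMn hc expr1n.
have hQ0 : 0 <= (1 + h) ^+ N by apply: exprn_ge0; lra.
have HN := H N.
have N0 : 0 <= N%:R :> R by [].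
have : L < N%:R * h * t by nra.
have : t * (1 + h) ^+ N <= L by nra.
nra.
Qed.

Lemma fixed : exists x, T x = x.
Proof.
have [x0 _] : \bigcap_(A in (set0 : set (set M))) A !=set0.
  apply: (@hcpt set0) => //; move=> G G0 _ [A GA]; exfalso; exact: (G0 _ GA).
have [A0 gA0 _] : exists2 A, good A & A `<=` setT.
  apply: good_sub => //; first by apply: closed_adm.
  by exists x0.
have hex : forall A, exists A2, good A -> [/\ good A2,
  (forall u a, A2 u -> A a -> d u a <= c * diam d A) & diam d A2 <= c * diam d A].
  move=> A; have [g|ng] := pselect (good A); last by exists A.
  by have [A2 h] := key g; exists A2.
have [f hf] := choice hex.
pose As n := iter n f A0.
have gAs n : good (As n) by elim: n => [//|n IH]; have [] := hf _ IH.
have hstep n := hf _ (gAs n).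
pose dl n := diam d (As n).
have dl0 : 0 <= dl 0%N by apply: diam_ge0; case: (gAs 0%N).
have c0 : 0 <= c by exact: ltW.
have hdl n : dl n <= c ^+ n * dl 0%N.
  elim: n => [|n IH]; first by rewrite expr0 mul1r.
  have [_ _ h2] := hstep n; rewrite exprS -mulrA.
  apply: le_trans h2 _; exact: ler_wpM2l.
pose e n := c ^+ n.+1 * dl 0%N / (1 - c).
have c1 : 1 - c != 0 by rewrite subr_eq0 gt_eqF.
have he1 n : e n.+1 = c * e n by rewrite /e exprS !mulrA.
have he2 n : e n * (1 - c) = c ^+ n.+1 * dl 0%N by rewrite /e divfK.
have he0 n : 0 <= e n.
  apply: divr_ge0; first by apply: mulr_ge0 => //; exact: exprn_ge0.
  by rewrite subr_ge0 ltW.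
have cross k : forall n u a, As (n + k).+1 u -> As n a -> d u a <= e n.
  elim: k => [|k IH] n u a.
    rewrite addn0 => hu ha; have [_ h1 _] := hstep n; have q1 : d u a <= c * dl n := h1 u a hu ha.
    have q2 : c * dl n <= c * (c ^+ n * dl 0%N) by apply: ler_wpM2l.
    have q3 := he2 n; rewrite exprS in q3.
    have q4 : 0 <= c * e n by apply: mulr_ge0.
    lra.
  rewrite -addSnnS => hu ha.
  have [_ [w Aw] _ _] := gAs n.+1.
  have q0 := IH n.+1 u w hu Aw; have [_ h1 _] := hstep n; have q1 : d w a <= c * dl n := h1 w a Aw ha.
  have q5 := dtri u w a.
  have q2 : c * dl n <= c * (c ^+ n * dl 0%N) by apply: ler_wpM2l.
  have q3 := he2 n; rewrite exprS in q3.
  have q6 := he1 n.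
  lra.
pose E n := [set x | forall k, (k <= n)%N -> forall a, As k a -> d x a <= e k].
have [||x hx] := @chain_cap [set E n | n in setT].
- move=> _ [n _ <-]; split.
    apply: closed_adm => y hy k kn a Ak; rewrite dsym; apply: hy => // z hz.
    by rewrite dsym; exact: hz.
  have [_ [u Au] _ _] := gAs n.+1.
  exists u => k kn a Ak; apply: (cross (n - k)%N) => //.
  by rewrite subnKC.
- move=> _ _ [n _ <-] [m _ <-]; have [nm|mn] := leqP n m.
    by right => z hz k kn; apply: hz; exact: leq_trans kn nm.
  by left => z hz k km; apply: hz; apply: leq_trans km (ltnW mn).
have hxn n a : As n a -> d x a <= e n.
  by apply: (hx (E n)); [exists n|].
exists x; apply/esym/deq0.
apply: (@geo _ (2 * (c * dl 0%N / (1 - c)) + dl 0%N)) => n.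
have [_ [y Ay] iAs _] := gAs n.
have h1 := hxn n y Ay.
have h2 : d (T x) (T y) <= e n.
  apply: (one_bound (he0 n) iAs Ay); exact: hxn.
have h3 : d y (T y) <= dl n by apply: diam_ub => //; exact: iAs.
have h4 := hdl n.
have h5 : e n = c ^+ n * (c * dl 0%N / (1 - c)) by rewrite /e exprSr !mulrA.
have t1 := dtri x y (T x); have t2 := dtri y (T y) (T x).
rewrite (dsym (T y) (T x)) in t2.
nra.
Qed.

End Main.

Theorem corollary4p6 (R : realType) (M : Type) (d : M -> M -> R)
  (T : M -> M) :
  is_metric d -> metric_bounded d -> URNS d -> admissible_compact d ->
  orbit_nonexpansive d T ->
  exists x : M, T x = x.
Proof.
move=> hm hb [c [/andP[c0 c1] hU]] hc ho.
exact: (fixed hm hb ho hc c0 c1 hU).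
Qed.
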